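(* Let $m$ and $K\ge0$ be integers with $2^K<m\le 2^{K+1}$, and let $n\ge0$ be an integer. Then the integer $$\prod_{j=1}^{m-1}\prod_{i=1}^{j}\frac{2n+i+j}{i+j}$$ is odd if and only if $n\equiv0\pmod{2^{K+1}}$ or $n\equiv -m\pmod{2^{K+1}}$.
   Context: This product equals the Hankel determinant $\det\left(C_{i+j+m}\right)_{i,j=0}^{n-1}$ of the Catalan numbers $C_k=\frac{1}{k+1}\binom{2k}{k}$, in particular it is an integer. *)

(* Defs.v *)
From mathcomp Require Import all_boot all_order all_algebra.
Set Implicit Arguments. Unset Strict Implicit. Unset Printing Implicit Defensive.
Import GRing.Theory Num.Theory.
Local Open Scope ring_scope.

Definition catalan_prod (m n : nat) : rat :=
  \prod_(1 <= j < m) \prod_(1 <= i < j.+1)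
     ((2 * n + i + j)%:R / (i + j)%:R).

(* Main.v *)
Require Import Defs.
From mathcomp Require Import all_boot all_order all_algebra.
From mathcomp Require Import zify.
Set Implicit Arguments. Unset Strict Implicit. Unset Printing Implicit Defensive.

Definition F q x := (x + q.-1) %/ q.

Lemma F_S q x : 0 < q -> F q x.+1 = (q %| x) + F q x.
Proof.
move=> q0; rewrite /F addSn divnS //.
have -> : (x + q.-1).+1 = x + q by lia.
by rewrite dvdn_addl.
Qed.

Lemma F_mono q x y : x <= y -> F q x <= F q y.
Proof. by move=> h; rewrite /F leq_div2r // leq_add2r. Qed.

Lemma cnt_F q x L : 0 < q ->
  \sum_(0 <= i < L) (q %| x + i) = F q (x + L) - F q x.
Proof.
move=> q0; elim: L => [|L IH]; first by rewrite big_geq // addn0 subnn.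
rewrite big_nat_recr //= IH addnS F_S //.
have := F_mono q (leq_addr L x); lia.
Qed.

Lemma F_addq q x k : 0 < q -> F q (x + k * q) = F q x + k.
Proof.
by move=> q0; rewrite /F -addnA (addnC (k * q)) addnA (addnC _ (k * q)) divnMDl // addnC.
Qed.

Definition Psi q m y := \sum_(1 <= j < m) \sum_(1 <= i < j.+1) (q %| y + i + j).
Definition D q y j := F q (y + j.*2.+1) - F q (y + j.+1).

Lemma Psi_D q m y : 0 < q -> Psi q m y = \sum_(0 <= j < m) D q y j.
Proof.
move=> q0; rewrite /Psi.
have E : forall j, \sum_(1 <= i < j.+1) (q %| y + i + j) = D q y j.
  move=> j; rewrite big_add1 /= .
  transitivity (\sum_(0 <= i < j) (q %| (y + j.+1) + i)).
    by apply: eq_bigr => i _; congr (_ %| _); lia.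
  rewrite cnt_F // /D; congr (F q _ - _); lia.
case: m => [|m]; first by rewrite !big_geq.
rewrite [RHS]big_ltn //.
have -> : D q y 0 = 0 by rewrite /D subnn.
by rewrite add0n; apply: eq_big_nat => j _; exact: E.
Qed.
Definition Vc q L y := (L + (L - (q-y).+1 %/ 2) + (L - (2*q-y).+1 %/ 2)) - (L + (L - (q - y)) + (L - (2*q - y))).
Lemma Vc_simpl q L y : y < q -> L <= q ->
  Vc q L y = (L - (q-y).+1 %/ 2) + (L - (2*q-y).+1 %/ 2) - (L - (q - y)).
Proof.
move=> h1 h2; rewrite /Vc.
have -> : L - (2*q - y) = 0 by lia.
set a := _ %/ 2; set b := _ %/ 2; lia.
Qed.
Lemma Vc_ee w z L : z < w -> L <= 2*w ->
  Vc (2*w) L (2*z) = (L - (w-z)) + (L - (2*w-z)) - (L - (2*w-2*z)).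
Proof. by move=> h1 h2; rewrite Vc_simpl; lia. Qed.
Lemma Vc_oe w z L : z <= w -> L <= 2*w+1 ->
  Vc (2*w+1) L (2*z) = (L - (w+1-z)) + (L - (2*w+1-z)) - (L - (2*w+1-2*z)).
Proof. by move=> h1 h2; rewrite Vc_simpl; lia. Qed.
Lemma Vc_oo w z L : z < w -> L <= 2*w+1 ->
  Vc (2*w+1) L (2*z+1) = (L - (w-z)) + (L - (2*w+1-z)) - (L - (2*w-2*z)).
Proof. by move=> h1 h2; rewrite Vc_simpl; lia. Qed.

Lemma Vc_e0 w L : 0 < w -> L <= 2*w -> Vc (2*w) L 0 = L - w.
Proof. by move=> h1 h2; have := @Vc_ee w 0 L h1 h2; rewrite muln0 => ->; lia. Qed.
Lemma Vc_o0 w L : L <= 2*w+1 -> Vc (2*w+1) L 0 = L - (w+1).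
Proof. by move=> h2; have := @Vc_oe w 0 L (leq0n _) h2; rewrite muln0 => ->; lia. Qed.

Lemma par_cases n : exists w, n = 2 * w + odd n.
Proof. exists n./2; rewrite -{1}(odd_double_half n) -mul2n; lia. Qed.

Lemma Vq_eq q y : 0 < q -> y < q -> (~~ odd q -> ~~ odd y) -> Vc q q y = Vc q q 0.
Proof.
move=> q0 yq hp; have [w hw] := par_cases q; have [z hz] := par_cases y.
move: hp hw hz; case: (odd q); case: (odd y) => hp hw hz; subst q y.
- rewrite Vc_oo ?Vc_o0; lia.
- rewrite !addn0 Vc_oe ?Vc_o0; lia.
- by have := hp isT.
- rewrite !addn0 Vc_ee ?Vc_e0; lia.
Qed.

Lemma Vr_ge q L y : 0 < q -> y < q -> L < q -> (~~ odd q -> ~~ odd y) -> Vc q L 0 <= Vc q L y.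
Proof.
move=> q0 yq Lq hp; have [w hw] := par_cases q; have [z hz] := par_cases y.
move: hp hw hz; case: (odd q); case: (odd y) => hp hw hz; subst q y.
- rewrite Vc_oo ?Vc_o0; lia.
- rewrite !addn0 Vc_oe ?Vc_o0; lia.
- by have := hp isT.
- rewrite !addn0 Vc_ee ?Vc_e0; lia.
Qed.

Lemma Vr_char w z L : 0 < w -> z < w -> L < 2 * w ->
  Vc (2*w) L (2*z) = Vc (2*w) L 0 <->
  z = 0 \/ (2*L <= 2*w /\ 2*z + 2*L <= 2*w) \/ (2*w < 2*L /\ 2*(2*w) <= 2*z + 2*L).
Proof. move=> w0 zw Lw; rewrite Vc_ee ?Vc_e0; lia. Qed.

Lemma D_shift q y t j : 0 < q -> D q (y + t * q) j = D q y j.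
Proof.
move=> q0; rewrite /D.
have -> : y + t * q + j.*2.+1 = (y + j.*2.+1) + t * q by lia.
have -> : y + t * q + j.+1 = (y + j.+1) + t * q by lia.
by rewrite !F_addq // subnDr.
Qed.

Lemma D_mod q y j : 0 < q -> D q y j = j %/ q + D q y (j %% q).
Proof.
move=> q0; rewrite /D.
set a := j %/ q; set b := j %% q.
have hj : j = b + a * q by rewrite /a /b addnC -divn_eq.
have -> : y + j.*2.+1 = (y + b.*2.+1) + (2 * a) * q.
  rewrite -mulnA hj; lia.
have -> : y + j.+1 = (y + b.+1) + a * q by rewrite hj; lia.
rewrite !F_addq //.
have := @F_mono q (y + b.+1) (y + b.*2.+1) ltac:(lia); lia.
Qed.

Lemma sum_periodic (g : nat -> nat) q u r : 0 < q ->
  \sum_(0 <= j < u * q + r) g (j %% q) =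
  u * \sum_(0 <= b < q) g b + \sum_(0 <= b < r) g (b %% q).
Proof.
move=> q0; elim: u => [|u IH]; first by rewrite !mul0n add0n.
rewrite mulSn -addnA (@big_cat_nat _ _ _ q) //=; last by lia.
have sh := big_addn 0 (q + (u * q + r)) q (fun _ => true) (fun j => g (j %% q)).
rewrite add0n addKn in sh; rewrite sh.
rewrite [X in _ + X](eq_bigr (fun j => g (j %% q))); last by move=> j _; rewrite modnDr.
rewrite IH addnA; congr (_ + _).
rewrite mulSn; congr (_ + _).
by apply: eq_big_nat => j /andP[_ hj]; rewrite modn_small.
Qed.

Definition V q L y := \sum_(0 <= b < L) D q y b.

Lemma Psi_decomp q m y : 0 < q ->
  Psi q m y = \sum_(0 <= j < m) j %/ q + (m %/ q) * V q q (y %% q) + V q (m %% q) (y %% q).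
Proof.
move=> q0; rewrite Psi_D //.
have E : forall j, D q y j = j %/ q + D q (y %% q) (j %% q).
  by move=> j; rewrite {1}(divn_eq y q) addnC D_shift // D_mod.
rewrite (eq_big_nat _ _ (F2 := fun j => j %/ q + D q (y %% q) (j %% q))); last by move=> j _; exact: E.
rewrite big_split /= -addnA; congr (_ + _).
have := sum_periodic (D q (y %% q)) (m %/ q) (m %% q) q0; rewrite -divn_eq => ->.
congr (_ + _); apply: eq_big_nat => b /andP[_ hb]; rewrite (@modn_small b q) //.
have := ltn_pmod m q0; lia.
Qed.

Lemma F_small q x : 0 < q -> 0 < x -> x <= 3 * q ->
  F q x = 1 + (q < x) + (2 * q < x).
Proof.
move=> q0 x0 x3; rewrite /F.
have key : forall k, k * q <= x + q.-1 -> x + q.-1 < k.+1 * q -> (x + q.-1) %/ q = k.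
  move=> k h1 h2; apply/eqP; rewrite eqn_leq -ltnS ltn_divLR // h2 /= leq_divRL //.
case: (ltnP q x) => h1; case: (ltnP (2 * q) x) => h2 /=; apply: key; lia.
Qed.

Lemma sum_ge d L : \sum_(0 <= b < L) (d <= b) = L - d.
Proof.
elim: L => [|L IH]; first by rewrite big_geq.
rewrite big_nat_recr //= IH; case: leqP => h /=; lia.
Qed.

Lemma sum_ge2 d L : \sum_(0 <= b < L) (d <= b.*2) = L - d.+1 %/ 2.
Proof.
elim: L => [|L IH]; first by rewrite big_geq.
rewrite big_nat_recr //= IH; case: leqP => h /=; lia.
Qed.

Lemma SF1 q L y : 0 < q -> y < q -> L <= q ->
  \sum_(0 <= b < L) F q (y + b.+1) = L + (L - (q - y)) + (L - (2 * q - y)).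
Proof.
move=> q0 yq Lq.
rewrite (eq_big_nat _ _ (F2 := fun b => 1 + (q - y <= b) + (2 * q - y <= b))).
  by rewrite !big_split /= sum_nat_const_nat !sum_ge; lia.
move=> b /andP[_ hb]; rewrite F_small //; lia.
Qed.

Lemma SF2 q L y : 0 < q -> y < q -> L <= q ->
  \sum_(0 <= b < L) F q (y + b.*2.+1) = L + (L - (q - y).+1 %/ 2) + (L - (2 * q - y).+1 %/ 2).
Proof.
move=> q0 yq Lq.
rewrite (eq_big_nat _ _ (F2 := fun b => 1 + (q - y <= b.*2) + (2 * q - y <= b.*2))).
  by rewrite !big_split /= sum_nat_const_nat !sum_ge2; lia.
move=> b /andP[_ hb]; rewrite F_small //; lia.
Qed.

Lemma V_closed q L y : 0 < q -> y < q -> L <= q -> V q L y = Vc q L y.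
Proof.
move=> q0 yq Lq; rewrite /V /D sumnB; last first.
  by move=> b _; apply: F_mono; lia.
by rewrite SF1 // SF2.
Qed.

Lemma Psi_ge q m n : 0 < q -> Psi q m 0 <= Psi q m (2 * n).
Proof.
move=> q0; rewrite !Psi_decomp // mod0n.
have yq := ltn_pmod (2 * n) q0; have rq := ltn_pmod m q0.
have hp : ~~ odd q -> ~~ odd ((2 * n) %% q).
  by move=> hq; rewrite odd_mod ?(negbTE hq) // oddM.
rewrite !V_closed //; try lia.
rewrite (@Vq_eq _ _ q0 yq hp) -addnA -addnA leq_add2l leq_add2l.
by apply: Vr_ge.
Qed.

Lemma Psi2_eq w m n : 0 < w ->
  Psi (2 * w) m (2 * n) = Psi (2 * w) m 0 <->
  n %% w = 0 \/ (m %% (2 * w) <= w /\ n %% w + m %% (2 * w) <= w) \/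
                (w < m %% (2 * w) /\ 2 * w <= n %% w + m %% (2 * w)).
Proof.
move=> w0; have q0 : 0 < 2 * w by lia.
rewrite !Psi_decomp // mod0n.
have yq := ltn_pmod (2 * n) q0; have rq := ltn_pmod m q0.
have hp : ~~ odd (2 * w) -> ~~ odd ((2 * n) %% (2 * w)).
  by move=> hq; rewrite odd_mod ?(negbTE hq) // oddM.
rewrite !V_closed //; try lia.
rewrite (@Vq_eq _ _ q0 yq hp) -!addnA.
set S := \sum_(0 <= j < m) _; set A := _ * _.
have E : forall B C, (S + (A + B) = S + (A + C)) <-> B = C.
  by move=> B C; split; [move=> /eqP; rewrite !eqn_add2l => /eqP | move=> ->].
rewrite E -muln_modr.
have zw := ltn_pmod n w0.
rewrite Vr_char //; lia.
Qed.

Lemma mult_gap Q a b : 0 < Q -> Q %| a -> Q %| b -> a < b -> a + Q <= b.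
Proof.
move=> Q0 /dvdnP[s ->] /dvdnP[t ->]; rewrite ltn_pmul2r // => st.
by rewrite addnC -mulSn leq_pmul2r.
Qed.

Definition C2 w m n := n %% w = 0 \/ (m %% (2 * w) <= w /\ n %% w + m %% (2 * w) <= w) \/
                (w < m %% (2 * w) /\ 2 * w <= n %% w + m %% (2 * w)).

Lemma only_if_dir K m n : 2 ^ K < m <= 2 ^ K.+1 ->
  C2 (2 ^ K) m n -> C2 (2 ^ K.+1) m n -> n %% 2 ^ K.+1 = 0 \/ (n + m) %% 2 ^ K.+1 = 0.
Proof.
rewrite /C2 expnS; set h := 2 ^ K => /andP[hm mQ].
have h0 : 0 < h by rewrite expn_gt0.
have r2 : m %% (2 * (2 * h)) = m by rewrite modn_small //; lia.
rewrite r2.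
have z1e : n %% (2 * h) < h -> n %% h = n %% (2 * h).
  move=> hz; rewrite -(@modn_small (n %% (2*h)) h) //.
  by rewrite (@modn_dvdm (2 * h)) // dvdn_mull.
have r1a : m < 2 * h -> m %% (2 * h) = m by move=> ?; rewrite modn_small.
have r1b : m = 2 * h -> m %% (2 * h) = 0 by move=> ->; rewrite modnn.
have e : (n + m) %% (2 * h) = (n %% (2 * h) + m) %% (2 * h) by rewrite modnDml.
have e2 : n %% (2 * h) + m = 2 * h -> (n %% (2 * h) + m) %% (2 * h) = 0 by move=> ->; rewrite modnn.
rewrite e; move: z1e r1a r1b e2 => {e r2}.
move: (n %% (2 * h)) (n %% h) (m %% (2 * h)) ((n %% (2 * h) + m) %% (2 * h)) => z2 z1 r1 t.
move=> A B C D H1 H2.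
have [hQ|hQ] : m < 2 * h \/ m = 2 * h by lia.
- have := B hQ; lia.
- have := C hQ; lia.
Qed.

Lemma if_dir K m n j : 2 ^ K < m <= 2 ^ K.+1 ->
  n %% 2 ^ K.+1 = 0 \/ (n + m) %% 2 ^ K.+1 = 0 -> C2 (2 ^ j) m n.
Proof.
rewrite /C2; set Q := 2 ^ K.+1; set w := 2 ^ j => /andP[hm mQ] hc.
have w0 : 0 < w by rewrite expn_gt0.
have Q0 : 0 < Q by rewrite expn_gt0.
have zw := ltn_pmod n w0.
have [jK|Kj] := leqP j K.
- have wQ : (2 * w) %| Q by rewrite /w /Q -expnS dvdn_exp2l.
  have wQ' : w %| Q by apply: dvdn_trans wQ; exact: dvdn_mull.
  case: hc => hc.
    left; apply/eqP; apply: (dvdn_trans wQ'); by rewrite /dvdn hc.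
  have hw : (n %% w + m %% (2 * w)) %% w = 0.
    rewrite -modnDm (@modn_dvdm (2 * w)) ?dvdn_mull // modnDm modnDml.
    apply/eqP; apply: (dvdn_trans wQ'); by rewrite /dvdn hc.
  have rw := ltn_pmod m (ltn_trans w0 (ltn_Pmull (isT : 1 < 2) w0)).
  move/eqP: hw; rewrite -/(dvdn w _) => /dvdnP[c hcw].
  move: (n %% w) (m %% (2 * w)) zw rw hcw => a b zw rw hcw.
  clear -zw rw hcw w0.
  have c3 : c < 3 by rewrite -(ltn_pmul2r w0); lia.
  move: hcw; case: c c3 => [|[|[|c]]] //= _; lia.
- have Qw : Q %| w by rewrite /w /Q dvdn_exp2l.
  have Qlw := dvdn_leq w0 Qw.
  have r : m %% (2 * w) = m.
    rewrite modn_small //; clear -mQ Qlw; lia.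
  rewrite r.
  have zQ : n %% w %% Q = n %% Q by rewrite modn_dvdm.
  case: hc => hc.
    have hz : Q %| n %% w by rewrite /dvdn zQ hc.
    have := @mult_gap Q _ _ Q0 hz Qw zw.
    move: (n %% w) zw => a zw; clear -zw mQ Qlw; lia.
  have hz : Q %| n %% w + m by rewrite /dvdn -modnDml zQ modnDml hc.
  right; left; split; first by clear -mQ Qlw; lia.
  case: (leqP (n %% w + m) w) => // hlt.
  have := @mult_gap Q _ _ Q0 Qw hz hlt.
  move: (n %% w) zw hlt => a zw hlt; clear -zw hlt mQ; lia.
Qed.

Definition NumP m y := \prod_(1 <= j < m) \prod_(1 <= i < j.+1) (y + i + j).

Lemma logn_prod_seq p (I : Type) (r : seq I) (P : pred I) (f : I -> nat) :
  (forall i, P i -> 0 < f i) ->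
  logn p (\prod_(i <- r | P i) f i) = \sum_(i <- r | P i) logn p (f i).
Proof.
move=> fpos; elim: r => [|x r IH]; first by rewrite !big_nil logn1.
rewrite !big_cons; case Px: (P x) => //.
by rewrite lognM ?IH ?fpos //; apply: prodn_cond_gt0.
Qed.

Lemma logn_prod_nat p a b (f : nat -> nat) :
  (forall i, a <= i < b -> 0 < f i) ->
  logn p (\prod_(a <= i < b) f i) = \sum_(a <= i < b) logn p (f i).
Proof.
move=> fpos; rewrite big_nat_cond [RHS]big_nat_cond logn_prod_seq //.
by move=> i /andP[h _]; apply: fpos.
Qed.

Lemma sum_le_min B L : \sum_(1 <= k < B) (k <= L) = minn B.-1 L.
Proof.
elim: B => [|B IH]; first by rewrite big_geq // min0n.
case: B IH => [|B] IH; first by rewrite big_geq // min0n.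
rewrite big_nat_recr //= IH /=; case: leqP => h /=; lia.
Qed.

Lemma logn_dvd_sum p x B : prime p -> 0 < x -> x < B ->
  logn p x = \sum_(1 <= k < B) (p ^ k %| x).
Proof.
move=> pp x0 xB.
rewrite (eq_bigr (fun k => nat_of_bool (k <= logn p x))); last by move=> k _; rewrite pfactor_dvdn.
rewrite sum_le_min.
have h1 : logn p x < p ^ logn p x by apply: ltn_expl; apply: prime_gt1.
have h2 : p ^ logn p x <= x by apply: dvdn_leq => //; apply: pfactor_dvdnn.
lia.
Qed.

Lemma NumP_gt0 m y : 0 < NumP m y.
Proof.
apply: prodn_gt0 => j; rewrite big_nat_cond; apply: prodn_cond_gt0 => i /andP[/andP[h _] _].
lia.
Qed.

Lemma logn_NumP p m y B : prime p -> y + 2 * m <= B ->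
  logn p (NumP m y) = \sum_(1 <= k < B) Psi (p ^ k) m y.
Proof.
move=> pp hB; rewrite /NumP /Psi logn_prod_nat; last first.
  move=> j _; rewrite big_nat_cond; apply: prodn_cond_gt0 => i /andP[/andP[h _] _]; lia.
rewrite (eq_big_nat _ _ (F2 := fun j => \sum_(1 <= i < j.+1) \sum_(1 <= k < B) (p ^ k %| y + i + j))); last first.
  move=> j /andP[_ hj]; rewrite logn_prod_nat; last by move=> i /andP[h _]; lia.
  apply: eq_big_nat => i /andP[h1 h2]; apply: logn_dvd_sum => //; lia.
rewrite [RHS]exchange_big_nat; apply: eq_bigr => j _.
by rewrite exchange_big_nat.
Qed.


Lemma sum_eq_iff (a b : nat -> nat) B : (forall k, a k <= b k) ->
  \sum_(1 <= k < B) b k = \sum_(1 <= k < B) a k <-> (forall k, 1 <= k < B -> b k = a k).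
Proof.
move=> ab; elim: B => [|B IH].
  by rewrite !big_geq //; split => // _ k; lia.
case: B IH => [|B] IH.
  by rewrite !big_geq //; split => // _ k; lia.
rewrite !(big_nat_recr B.+1) //=.
have hs : \sum_(1 <= k < B.+1) a k <= \sum_(1 <= k < B.+1) b k by apply: leq_sum.
have hB := ab B.+1.
split.
- move=> e; have [e1 e2] : \sum_(1 <= k < B.+1) b k = \sum_(1 <= k < B.+1) a k /\ b B.+1 = a B.+1 by lia.
  move=> k /andP[k1 kB]; case: (ltnP k B.+1) => hk.
    by apply IH; rewrite ?k1.
  by have -> : k = B.+1 by lia.
- move=> H; rewrite (H B.+1); last by rewrite ltnSn.
  congr (_ + _); apply/IH => k /andP[k1 kB]; apply: H; rewrite k1 /=; lia.
Qed.

Local Open Scope ring_scope.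
Import GRing.Theory Num.Theory.
Lemma catalan_eq m n : catalan_prod m n = (NumP m (2 * n)%N)%:R / (NumP m 0)%:R.
Proof.
rewrite /catalan_prod /NumP.
under eq_bigr do rewrite prodf_div.
rewrite prodf_div !natr_prod.
congr (_ / _); apply: eq_bigr => j _; rewrite natr_prod //.
Qed.


Theorem corollary3p2 (m K n : nat) :
  (2 ^ K < m <= 2 ^ K.+1)%N ->
  exists N : nat, catalan_prod m n = N%:R /\
    (odd N <-> (n %% 2 ^ K.+1 = 0)%N \/ ((n + m) %% 2 ^ K.+1 = 0)%N).
Proof.
move=> hK.
set Num := NumP m (2 * n)%N; set Den := NumP m 0.
have D0 : (0 < Den)%N := NumP_gt0 m 0.
have N0 : (0 < Num)%N := NumP_gt0 m (2 * n)%N.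
have hB1 : (2 * n + 2 * m <= 2 * n + 2 * m)%N by [].
have hB0 : (0 + 2 * m <= 2 * n + 2 * m)%N by rewrite add0n leq_addl.
have dv : (Den %| Num)%N.
  apply/dvdn_partP => // p; rewrite mem_primes => /and3P[pp _ _].
  rewrite p_part pfactor_dvdn // (logn_NumP pp hB1) (logn_NumP pp hB0).
  apply: leq_sum => k _; apply: Psi_ge; by rewrite expn_gt0 prime_gt0.
exists (Num %/ Den)%N; split.
  rewrite catalan_eq -/Num -/Den -{1}(divnK dv) natrM mulfK //.
  by rewrite pnatr_eq0 -lt0n.
have q0 : (0 < Num %/ Den)%N by rewrite divn_gt0 // dvdn_leq.
have lg : logn 2 Num = (logn 2 (Num %/ Den) + logn 2 Den)%N.
  by rewrite -lognM // divnK.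
have oddE : odd (Num %/ Den) <-> logn 2 (Num %/ Den) = 0%N.
  have := pfactor_dvdn 1 (isT : prime 2) q0; rewrite expn1 dvdn2.
  by case: (odd _) => /= H; split => //; lia.
rewrite oddE.
have step : logn 2 (Num %/ Den) = 0%N <-> logn 2 Num = logn 2 Den by lia.
rewrite step (logn_NumP (isT : prime 2) hB1) (logn_NumP (isT : prime 2) hB0).
rewrite sum_eq_iff; last by move=> k; apply: Psi_ge; rewrite expn_gt0.
have KB : (K.+2 < 2 * n + 2 * m)%N.
  have := ltn_expl K (isT : (1 < 2)%N); move: hK => /andP[h1 h2]; lia.
split.
- move=> H; apply: (@only_if_dir K m n hK).
  + have := H K.+1; rewrite expnS => /(_ ltac:(lia)) /Psi2_eq; apply; by rewrite expn_gt0.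
  + have := H K.+2; rewrite expnS => /(_ ltac:(lia)) /Psi2_eq; apply; by rewrite expn_gt0.
- move=> hc k /andP[k1 _]; case: k k1 => // k _.
  rewrite expnS; apply/Psi2_eq; first by rewrite expn_gt0.
  exact: (@if_dir K m n k hK hc).
Qed.
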